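(* Consider the noiseless setting and assume in addition that $\mathbf X$ is i.i.d. Given reads $x_1^\ell(1),x_1^\ell(2)$, let $t_+$ be the largest $t\in[\ell]$ with $x_{\ell-t+1}^\ell(1)=x_1^t(2)$ ($t_+:=0$ if none), and $t_-$ the largest $t\in[\ell-1]$ with $x_{\ell-t+1}^\ell(2)=x_1^t(1)$ ($t_-:=0$ if none). Let $\Gamma_+(t):=1/P_{X_1^t}(x_1^t(2))$, $\Gamma_-(t):=1/P_{X_1^t}(x_1^t(1))$ for $t\ge1$, and $\Gamma_\pm(0):=1$. Then the rule \[ \hat T_{\mathrm{MAP}}(x_1^\ell(1),x_1^\ell(2))=\begin{cases}t_+,&\Gamma_+(t_+)\ge\max\{\Gamma_-(t_-),n_\ell\},\\ -t_-,&\Gamma_-(t_-)\ge\max\{\Gamma_+(t_+),n_\ell\},\\ 0,&\text{otherwise}\end{cases} \] is a maximum a posteriori (hence Bayes-optimal) detector of $T$.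
   Context: Setting. $\mathcal X$ finite alphabet; $\mathbf X=\{X_i\}_{i\in\mathbb Z}$ a random process on $\mathcal X$ (here i.i.d.). Fix $\beta>0$; $\ell=\beta\log n$ (integer), $n_\ell:=n-(2\ell-1)$. $I(1)\sim\mathrm{Uniform}[n]$; conditionally on $I(1)$, $I(2)$ is uniform on $I(1)+\{-\ell+1,\dots,n-\ell\}$ if $1\le I(1)\le\ell-1$, uniform on $[n]$ if $\ell\le I(1)\le n-\ell+1$, uniform on $I(1)+\{\ell-n,\dots,\ell-1\}$ if $n-\ell+2\le I(1)\le n$; independent of $\mathbf X$. Reads $X_1^\ell(j):=X_{I(j)}^{I(j)+\ell-1}$. Signed overlap $T:=\max\{0,\ell-(I(2)-I(1))\}$ if $I(2)\ge I(1)$, else $T:=-\max\{0,\ell-(I(1)-I(2))\}$; values in $\{-(\ell-1),\dots,\ell\}$ with $\mathbb P[T=0]=n_\ell/n$ and $\mathbb P[T=t]=1/n$ for $t\ne0$. Noiseless setting: reads are observed exactly. A MAP detector maps the observed reads to a maximizer over $t$ of $\mathbb P[T=t]\cdot\mathbb P[X_1^\ell(1)=x_1^\ell(1),X_1^\ell(2)=x_1^\ell(2)\mid T=t]$. *)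

(* Defs.v *)
From HB Require Import structures.
From mathcomp Require Import all_boot all_order all_algebra.
Unset Printing Implicit Defensive.
Import Order.TTheory GRing.Theory Num.Theory.
Local Open Scope ring_scope.

(* Support of I(2) given I(1) = i1 (positions are integers). *)
Definition I2_range (n l : nat) (i1 i2 : int) : bool :=
  if i1 <= l%:Z - 1 then (i1 - l%:Z + 1 <= i2) && (i2 <= i1 + n%:Z - l%:Z)
  else if i1 <= n%:Z - l%:Z + 1 then (1 <= i2) && (i2 <= n%:Z)
  else (i1 + l%:Z - n%:Z <= i2) && (i2 <= i1 + l%:Z - 1).

(* P[I(1) = i1, I(2) = i2] = P[I(1)=i1] * P[I(2)=i2 | I(1)=i1]
   (I(1) uniform on [n]; I(2) uniform on a set of n integers). *)
Definition PI (R : realFieldType) (n l : nat) (i1 i2 : int) : R :=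
  if (1 <= i1) && (i1 <= n%:Z) && I2_range n l i1 i2
  then (n%:R)^-1 * (n%:R)^-1 else 0.

Definition overlap (l : nat) (i1 i2 : int) : int :=
  if i1 <= i2 then Num.max 0 (l%:Z - (i2 - i1))
  else - Num.max 0 (l%:Z - (i1 - i2)).

(* Finite window of the process: index j : 'I_(win n l).+1 stands for the
   integer position j - l; it covers positions -l .. n+2l, which contains
   every symbol any read can touch (positions 2-l .. n+2l-2). *)
Definition win (n l : nat) : nat := (n + 3 * l)%N.
Definition pos (n l : nat) (j : 'I_(win n l).+1) : int := j%:Z - l%:Z.

Definition Xat {A : finType} (n l : nat) (x : {ffun 'I_(win n l).+1 -> A})
  (z : int) : A := x (inord (absz (z + l%:Z))).

Definition read {A : finType} (n l : nat) (x : {ffun 'I_(win n l).+1 -> A})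
  (i : int) : l.-tuple A := [tuple Xat n l x (i + k%:Z) | k < l].

Definition Pwin {R : realFieldType} {A : finType} (p : A -> R) (n l : nat)
  (x : {ffun 'I_(win n l).+1 -> A}) : R := \prod_j p (x j).

Definition prior (R : realFieldType) (n l : nat) (t : int) : R :=
  \sum_(j1 : 'I_(win n l).+1) \sum_(j2 : 'I_(win n l).+1)
    (if overlap l (pos n l j1) (pos n l j2) == t then PI R n l (pos n l j1) (pos n l j2) else 0).

Definition joint {R : realFieldType} {A : finType} (p : A -> R) (n l : nat)
  (t : int) (a b : l.-tuple A) : R :=
  \sum_(j1 : 'I_(win n l).+1) \sum_(j2 : 'I_(win n l).+1)
  \sum_(x : {ffun 'I_(win n l).+1 -> A})
    (if [&& overlap l (pos n l j1) (pos n l j2) == t,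
            read n l x (pos n l j1) == a & read n l x (pos n l j2) == b]
     then PI R n l (pos n l j1) (pos n l j2) * Pwin p n l x else 0).

Definition likelihood {R : realFieldType} {A : finType} (p : A -> R) (n l : nat)
  (t : int) (a b : l.-tuple A) : R := joint p n l t a b / prior R n l t.

Definition map_score {R : realFieldType} {A : finType} (p : A -> R) (n l : nat)
  (t : int) (a b : l.-tuple A) : R := prior R n l t * likelihood p n l t a b.

Definition is_MAP_detector {R : realFieldType} {A : finType} (p : A -> R)
  (n l : nat) (d : l.-tuple A -> l.-tuple A -> int) : Prop :=
  forall a b : l.-tuple A,
    (- (l%:Z - 1) <= d a b <= l%:Z) /\
    (forall t : int, - (l%:Z - 1) <= t <= l%:Z ->
       map_score p n l t a b <= map_score p n l (d a b) a b).

Definition tplus {A : finType} (l : nat) (a b : l.-tuple A) : nat :=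
  \max_(t < l.+1 | (0 < t)%N && (drop (l - t) a == take t b)) t.
Definition tminus {A : finType} (l : nat) (a b : l.-tuple A) : nat :=
  \max_(t < l | (0 < t)%N && (drop (l - t) b == take t a)) t.

Definition PX {R : realFieldType} {A : finType} (p : A -> R) (s : seq A) : R :=
  \prod_(y <- s) p y.

Definition Gamma {R : realFieldType} {A : finType} (p : A -> R) (l : nat)
  (s : l.-tuple A) (t : nat) : R :=
  if t == 0%N then 1 else (PX p (take t s))^-1.

Definition T_MAP {R : realFieldType} {A : finType} (p : A -> R) (n l : nat)
  (a b : l.-tuple A) : int :=
  let tp := tplus l a b in
  let tm := tminus l a b in
  let gp := Gamma p l b tp in
  let gm := Gamma p l a tm in
  let nl : R := (n - (2 * l - 1))%N%:R in
  if Num.max gm nl <= gp then tp%:Z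
  else if Num.max gp nl <= gm then - (tm%:Z)
  else 0.

(* Main.v *)
Require Import Defs.
From HB Require Import structures.
From mathcomp Require Import all_boot all_order all_algebra.
From mathcomp Require Import zify ring lra.
Import Order.TTheory GRing.Theory Num.Theory.

Lemma bignat_id (R : Type) (idx : R) (op : Monoid.law idx) (m k : nat) (F : nat -> R) :
  (forall u, m <= u < k -> F u = idx) -> \big[op/idx]_(m <= u < k) F u = idx.
Proof. by move=> H; apply: big1_seq => u /andP[_]; rewrite mem_index_iota; apply: H. Qed.

Lemma big_window (R : Type) (idx : R) (op : Monoid.law idx) (N lo hi : nat) (F : nat -> R) :
  hi <= N ->
  \big[op/idx]_(0 <= u < N) (if (lo <= u) && (u < hi) then F u else idx) =
  \big[op/idx]_(lo <= u < hi) F u.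
Proof.
move=> hN; case: (leqP lo hi) => hl; last first.
  rewrite (big_geq (ltnW hl)) bignat_id // => u _.
  by have -> : ((lo <= u) && (u < hi)) = false by lia.
rewrite (@big_cat_nat _ _ _ lo) //=; last by lia.
rewrite (@big_cat_nat _ _ _ hi lo) //= [X in op X _]bignat_id; last first.
  by move=> u hu; have -> : ((lo <= u) && (u < hi)) = false by lia.
rewrite Monoid.mul1m [X in op _ X]bignat_id; last first.
  by move=> u hu; have -> : ((lo <= u) && (u < hi)) = false by lia.
rewrite Monoid.mulm1; apply: eq_big_nat => u hu.
by have -> : ((lo <= u) && (u < hi)) = true by lia.
Qed.

Lemma cnt_window (N lo hi : nat) : hi <= N ->
  \sum_(0 <= u < N) ((lo <= u) && (u < hi) : nat) = hi - lo.
Proof.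
move=> hN; rewrite -[RHS]muln1 -sum_nat_const_nat -(@big_window _ _ _ N lo hi) //.

Qed.

Lemma big_shift (R : Type) (idx : R) (op : Monoid.law idx) (m k : nat) (F : nat -> R) :
  \big[op/idx]_(m <= u < m + k) F u = \big[op/idx]_(0 <= i < k) F (m + i).
Proof.
rewrite -{1}[m]add0n big_addn addKn; apply: eq_bigr => i _; by rewrite addnC.
Qed.

Local Open Scope ring_scope.

Lemma prod_if0 (R : comNzRingType) (I : finType) (P : pred I) (f : I -> R) :
  \prod_i (if P i then f i else 0%R) = if [forall i, P i] then \prod_i f i else 0%R.
Proof.
case: ifP => [/forallP H | /forallP H].
  by apply: eq_bigr => i _; rewrite H.
have [i Hi] : exists i, ~~ P i.
  by apply/existsP; rewrite -negb_forall; apply/forallP.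
by rewrite (bigD1 i) //= (negbTE Hi) GRing.mul0r.
Qed.

Lemma prod_eqseq (R : comNzRingType) (T : eqType) (x0 : T) (s1 s2 : seq T) t :
  size s1 = t -> size s2 = t ->
  \prod_(0 <= i < t) ((nth x0 s1 i == nth x0 s2 i)%:R : R) = (s1 == s2)%:R.
Proof.
move=> h1 h2; case: eqVneq => [<-|hne].
  by rewrite big1 // => i _; rewrite eqxx.
case: (boolP [forall i : 'I_t, nth x0 s1 i == nth x0 s2 i]) => H.
  case/eqP: hne; apply: (eq_from_nth (x0 := x0)); first by rewrite h1 h2.
  by move=> i; rewrite h1 => hi; apply/eqP; exact: (forallP H (Ordinal hi)).
move: H; rewrite negb_forall => /existsP [i Hi].
by rewrite big_mkord (bigD1 i) //= (negbTE Hi) GRing.mul0r.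
Qed.

Lemma read_eq (A : finType) n l (x : {ffun 'I_(win n l).+1 -> A}) (u : nat)
   (s : l.-tuple A) x0 : (u + l <= (win n l).+1)%N ->
  (read n l x (u%:Z - l%:Z) == s) =
  [forall j : 'I_(win n l).+1, (u <= j < u + l)%N ==> (x j == nth x0 s (j - u))].
Proof.
move=> hu; rewrite eqEtuple.
have hX : forall k : 'I_l, tnth (read n l x (u%:Z - l%:Z)) k = x (inord (u + k)).
  move=> k; rewrite /read tnth_mktuple /Xat; congr (x (inord _)); lia.
apply/forallP/forallP => H j.
  apply/implyP => /andP[h1 h2].
  have hk : (j - u < l)%N by lia.
  have := H (Ordinal hk); rewrite hX (tnth_nth x0) /=.
  by have -> : inord (u + (j - u)) = j by apply: val_inj; rewrite /= inordK; lia.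
rewrite hX (tnth_nth x0).
have hj : (u + j < (win n l).+1)%N by case: j => /= j hj; lia.
have := H (inord (u + j)); rewrite inordK //.
move: (H (inord (u + j))); rewrite inordK //.
have -> : (u + j - u)%N = j by lia.
have -> : (u <= u + j < u + l)%N = true by move: (ltn_ord j); lia.
by [].
Qed.


Lemma sum_pick (R : comNzRingType) (A : finType) (p : A -> R) (g : A) :
  \sum_y (if y == g then p y else 0) = p g.
Proof. by rewrite -big_mkcond big_pred1_eq. Qed.

Lemma Qlem (R : realFieldType) (A : finType) (p : A -> R) (hp1 : \sum_y p y = 1)
  n l (a b : l.-tuple A) (x0 : A) (u1 u2 : nat) :
  (u1 <= u2)%N -> (u2 + l <= (win n l).+1)%N ->
  \sum_(x : {ffun 'I_(win n l).+1 -> A})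
     (if (read n l x (u1%:Z - l%:Z) == a) && (read n l x (u2%:Z - l%:Z) == b)
      then Pwin p n l x else 0)
  = (drop (u2 - u1) a == take (l - (u2 - u1)) b)%:R *
    (PX p a * PX p (drop (l - (u2 - u1)) b)).
Proof.
move=> h12 h2N.
set N := (win n l).+1.
set d := (u2 - u1)%N; set t := (l - d)%N.
pose in1 (j : nat) := (u1 <= j < u1 + l)%N.
pose in2 (j : nat) := (u2 <= j < u2 + l)%N.
pose g1 (j : nat) := nth x0 a (j - u1).
pose g2 (j : nat) := nth x0 b (j - u2).
pose F (j : 'I_N) (y : A) := if (in1 j ==> (y == g1 j)) && (in2 j ==> (y == g2 j)) then p y else 0.
pose G (u : nat) := (if in1 u then p (g1 u) else 1) * (if in2 u && ~~ in1 u then p (g2 u) else 1)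
    * (if in1 u && in2 u then ((g1 u == g2 u)%:R : R) else 1).
have step1 : forall x : {ffun 'I_N -> A},
   (if (read n l x (u1%:Z - l%:Z) == a) && (read n l x (u2%:Z - l%:Z) == b)
      then Pwin p n l x else 0) = \prod_j F j (x j).
  move=> x; rewrite (read_eq _ _ _ x u1 a x0) ?(read_eq _ _ _ x u2 b x0) //; last by lia.
  rewrite /F prod_if0 /Pwin.
  congr (if _ then _ else _).
  apply/andP/forallP => [[/forallP H1 /forallP H2] j|H]; first by rewrite H1 H2.
  by split; apply/forallP => j; case/andP: (H j).
rewrite (eq_bigr _ (fun x _ => step1 x)) -bigA_distr_bigA /=.
have step3 : forall j : 'I_N, \sum_y F j y = G j.
  move=> j; rewrite /F /G.
  case: (in1 j); case: (in2 j) => /=; rewrite ?andbT ?mulr1 ?mul1r.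
  - case: (eqVneq (g1 j) (g2 j)) => [<-|hne].
      by rewrite mulr1 (eq_bigr (fun y => if y == g1 j then p y else 0)) ?sum_pick // => y _; rewrite andbb.
    rewrite mulr0 big1 // => y _.
    case: (eqVneq y (g1 j)) => [->|] //=.
    by rewrite (negbTE hne).
  - by rewrite -(sum_pick _ _ p (g1 j)); apply: eq_bigr => y _; rewrite andbT.
  - by rewrite sum_pick.
  - exact: hp1.
rewrite (eq_bigr _ (fun j _ => step3 j)) /=.
rewrite -(big_mkord xpredT G) /G big_split /= big_split /=.
have e1 : \prod_(0 <= i < N) (if in1 i then p (g1 i) else 1) = PX p a.
  rewrite /in1 (@big_window _ _ _ N u1 (u1 + l)); last by lia.
  rewrite big_shift /PX (big_nth x0) size_tuple; apply: eq_bigr => i _.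
  by rewrite /g1; congr (p (nth _ _ _)); lia.
have e2 : \prod_(0 <= i < N) (if in2 i && ~~ in1 i then p (g2 i) else 1) = PX p (drop t b).
  rewrite (eq_bigr (fun i => if ((u2 + t <= i) && (i < u2 + l))%N then p (g2 i) else 1)); last first.
    by move=> i _; have -> : (in2 i && ~~ in1 i) = ((u2 + t <= i) && (i < u2 + l))%N by rewrite /in1 /in2 /t /d; lia.
  rewrite (@big_window _ _ _ N (u2 + t) (u2 + l)) //.
  have -> : (u2 + l = u2 + t + (l - t))%N by lia.
  rewrite big_shift /PX (big_nth x0) size_drop size_tuple; apply: eq_bigr => i _.
  by rewrite /g2 nth_drop; congr (p (nth _ _ _)); lia.
have e3 : \prod_(0 <= i < N) (if in1 i && in2 i then ((g1 i == g2 i)%:R : R) else 1) = (drop d a == take t b)%:R.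
  rewrite (eq_bigr (fun i => if ((u2 <= i) && (i < u2 + t))%N then ((g1 i == g2 i)%:R : R) else 1)); last first.
    by move=> i _; have -> : (in1 i && in2 i) = ((u2 <= i) && (i < u2 + t))%N by rewrite /in1 /in2 /t /d; lia.
  rewrite (@big_window _ _ _ N u2 (u2 + t)); last by rewrite /t /d; lia.
  rewrite big_shift -(prod_eqseq _ _ x0 (drop d a) (take t b) t); first last.
  - by rewrite size_takel // size_tuple /t; lia.
  - by rewrite size_drop size_tuple.
  apply: eq_big_nat => i hi.
  rewrite /g1 /g2 nth_drop nth_take //.
  by congr ((nth _ _ _ == nth _ _ _)%:R); lia.
by rewrite e1 e2 e3 mulrC mulrA.
Qed.


Definition qv (R : realFieldType) (A : finType) (p : A -> R) (l : nat)
  (a b : l.-tuple A) (t : int) : R :=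
  if (0 <= t) then (drop (l - absz t) a == take (absz t) b)%:R * (PX p a * PX p (drop (absz t) b))
  else (drop (l - absz t) b == take (absz t) a)%:R * (PX p b * PX p (drop (absz t) a)).
Arguments qv {R A} p {l} a b t.

Lemma drop_ll (A : Type) (l d : nat) (s : seq A) : size s = l ->
  drop (l - (l - d)) s = drop d s.
Proof.
move=> hs; case: (leqP d l) => h; first by rewrite subKn.
by rewrite !drop_oversize // hs; lia.
Qed.

Lemma PI_bounds (R : realFieldType) n l (j1 j2 : 'I_(win n l).+1) :
  PI R n l (pos n l j1) (pos n l j2) != 0 ->
  [/\ (l.+1 <= j1 <= l + n)%N, (j1 + l <= (win n l).+1)%N & (j2 + l <= (win n l).+1)%N].
Proof.
rewrite /PI /pos /win; case: ifP; last by rewrite eqxx.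
move=> /andP[/andP[h1 h2] h3] _.
move: h3; rewrite /I2_range.
case: ifP => c1; [|case: ifP => c2]; move=> /andP[h4 h5]; split; lia.
Qed.

Lemma Qpair (R : realFieldType) (A : finType) (p : A -> R) (hp1 : \sum_y p y = 1)
  n l (a b : l.-tuple A) (x0 : A) (j1 j2 : 'I_(win n l).+1) :
  PI R n l (pos n l j1) (pos n l j2) != 0 ->
  \sum_(x : {ffun 'I_(win n l).+1 -> A})
     (if (read n l x (pos n l j1) == a) && (read n l x (pos n l j2) == b)
      then Pwin p n l x else 0)
  = qv p a b (overlap l (pos n l j1) (pos n l j2)).
Proof.
move=> /PI_bounds [hb1 hb2 hb3].
case: (leqP j1 j2) => h12.
  rewrite /pos (Qlem _ _ _ hp1 _ _ _ _ x0) //.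
  have -> : overlap l (j1%:Z - l%:Z) (j2%:Z - l%:Z) = (l - (j2 - j1))%N%:Z.
    by rewrite /overlap; case: ifP; lia.
  by rewrite /qv /= drop_ll // size_tuple.
rewrite /pos (eq_bigr (fun x => if (read n l x (j2%:Z - l%:Z) == b) && (read n l x (j1%:Z - l%:Z) == a) then Pwin p n l x else 0)); last by move=> x _; rewrite andbC.
rewrite (Qlem _ _ _ hp1 _ _ _ _ x0) //; last by lia.
have -> : overlap l (j1%:Z - l%:Z) (j2%:Z - l%:Z) = - (l - (j1 - j2))%N%:Z.
  by rewrite /overlap; case: ifP; lia.
case: (posnP (l - (j1 - j2))%N) => hz.
  rewrite hz /qv /= subn0 drop0 take0 drop_oversize ?size_tuple; last by lia.
  rewrite [drop l a]drop_oversize ?size_tuple // ?abszN /= ?take0 ?drop0 ?eqxx mul1r mulrC. by rewrite mul1r.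
rewrite /qv; case: ifP => h0; first by exfalso; lia.
by rewrite abszN /= drop_ll // size_tuple.
Qed.


Definition bb (n l : nat) (t : int) (u1 u2 : nat) : bool :=
  (overlap l (u1%:Z - l%:Z) (u2%:Z - l%:Z) == t) &&
  ((1 <= u1%:Z - l%:Z) && (u1%:Z - l%:Z <= n%:Z) && I2_range n l (u1%:Z - l%:Z) (u2%:Z - l%:Z)).

Lemma inner_cnt (n l : nat) (t : int) (u1 : nat) : (1 <= l)%N -> (2 * l <= n)%N ->
  - (l%:Z - 1) <= t <= l%:Z -> (l.+1 <= u1 <= l + n)%N ->
  (\sum_(0 <= u2 < (win n l).+1) bb n l t u1 u2 = if t == 0 then n - (2 * l - 1) else 1)%N.
Proof.
move=> hl hn ht hu1.
case: (eqVneq t 0) => [ht0|htn].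
  pose L := if (u1 <= 2 * l - 1)%N then (u1 + 1 - l)%N else if (u1 <= n + 1)%N then l.+1 else (u1 + l - n)%N.
  rewrite (eq_bigr (fun u2 => ((L <= u2) && (u2 < u1 + 1 - l)) + ((u1 + l <= u2) && (u2 < L + n))))%N; last first.
    move=> u2 _; rewrite /bb ht0 /overlap /I2_range /L.
    repeat (case: ifP => ?); lia.
  rewrite big_split /= !cnt_window /win /L; repeat (case: ifP => ?); lia.
pose v := if (0 < t) then (u1 + l - absz t)%N else (u1 - l + absz t)%N.
rewrite (eq_bigr (fun u2 => (((v <= u2) && (u2 < v.+1))%N : nat))); last first.
  move=> u2 _; rewrite /bb /overlap /I2_range /v.
  repeat (case: ifP => ?); lia.
rewrite cnt_window /win /v; repeat (case: ifP => ?); lia.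
Qed.

Lemma prior_val (R : realFieldType) (n l : nat) (t : int) : (1 <= l)%N -> (2 * l <= n)%N ->
  - (l%:Z - 1) <= t <= l%:Z ->
  prior R n l t = (if t == 0 then (n - (2 * l - 1))%N%:R else 1) / n%:R.
Proof.
move=> hl hn ht.
pose k := if t == 0 then (n - (2 * l - 1))%N else 1%N.
have hk : (if t == 0 then (n - (2 * l - 1))%N%:R else 1) = k%:R :> R by rewrite /k; case: ifP.
rewrite hk /prior.
pose c : R := n%:R^-1 * n%:R^-1.
have e : forall j1 j2 : 'I_(win n l).+1,
   (if overlap l (pos n l j1) (pos n l j2) == t then PI R n l (pos n l j1) (pos n l j2) else 0)
   = c * (bb n l t j1 j2 : nat)%:R.
  move=> j1 j2; rewrite /PI /bb /pos.
  by case: (_ == t); case: (_ && _ && _) => /=; rewrite ?mulr0 ?mulr1.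
rewrite (eq_bigr (fun j1 : 'I_(win n l).+1 => \sum_(j2 : 'I_(win n l).+1) c * (bb n l t j1 j2 : nat)%:R)); last first.
  by move=> j1 _; apply: eq_bigr => j2 _; rewrite e.
rewrite (eq_bigr (fun j1 : 'I_(win n l).+1 => c * (\sum_(j2 : 'I_(win n l).+1) (bb n l t j1 j2 : nat))%:R)); last first.
  by move=> j1 _; rewrite natr_sum mulr_sumr.
rewrite -mulr_sumr -natr_sum.
have -> : (\sum_(j1 : 'I_(win n l).+1) \sum_(j2 : 'I_(win n l).+1) (bb n l t j1 j2 : nat))%N
    = (\sum_(0 <= u1 < (win n l).+1) \sum_(0 <= u2 < (win n l).+1) (bb n l t u1 u2 : nat))%N.
  by rewrite big_mkord; apply: eq_bigr => j1 _; rewrite big_mkord.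
rewrite (eq_bigr (fun u1 => (((l.+1 <= u1) && (u1 < l + n + 1))%N : nat) * k)%N); last first.
  move=> u1 _; case: (boolP ((l.+1 <= u1) && (u1 < l + n + 1))%N) => hu1.
    by rewrite mul1n inner_cnt //; lia.
  rewrite mul0n big1 // => u2 _.
  by rewrite /bb; have -> : ((1 <= u1%:Z - l%:Z) && (u1%:Z - l%:Z <= n%:Z)) = false by [lia]; rewrite andbF.
rewrite -big_distrl /= cnt_window; last by rewrite /win; lia.
have -> : (l + n + 1 - l.+1)%N = n by lia.
have hn0 : n%:R != 0 :> R by rewrite pnatr_eq0; lia.
by rewrite /c natrM; field.
Qed.


Lemma joint_val (R : realFieldType) (A : finType) (p : A -> R) (hp1 : \sum_y p y = 1)
  n l (a b : l.-tuple A) (x0 : A) (t : int) :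
  joint p n l t a b = qv p a b t * prior R n l t.
Proof.
rewrite /joint /prior mulr_sumr; apply: eq_bigr => j1 _.
rewrite mulr_sumr; apply: eq_bigr => j2 _.
case: eqP => hov /=; last by rewrite mulr0 big1.
rewrite (eq_bigr (fun x => PI R n l (pos n l j1) (pos n l j2) *
   (if (read n l x (pos n l j1) == a) && (read n l x (pos n l j2) == b) then Pwin p n l x else 0))); last first.
  by move=> x _; case: ifP; rewrite ?mulr0.
rewrite -mulr_sumr.
case: (eqVneq (PI R n l (pos n l j1) (pos n l j2)) 0) => [->|hPI]; first by rewrite !mul0r mulr0.
by rewrite (Qpair _ _ _ hp1 _ _ _ _ x0) // hov mulrC.
Qed.

Lemma score_val (R : realFieldType) (A : finType) (p : A -> R) (hp1 : \sum_y p y = 1)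
  n l (a b : l.-tuple A) (x0 : A) (t : int) : (1 <= l)%N -> (2 * l <= n)%N ->
  - (l%:Z - 1) <= t <= l%:Z ->
  map_score p n l t a b = qv p a b t * ((if t == 0 then (n - (2 * l - 1))%N%:R else 1) / n%:R).
Proof.
move=> hl hn ht.
rewrite /map_score /likelihood (joint_val _ _ _ hp1 _ _ _ _ x0) (prior_val _ _ _ _ hl hn ht).
have hn0 : n%:R != 0 :> R by rewrite pnatr_eq0; lia.
have hk : (if t == 0 then (n - (2 * l - 1))%N%:R else 1) != 0 :> R.
  by case: ifP => _; rewrite ?oner_eq0 // pnatr_eq0; lia.
field; by rewrite hn0 hk.
Qed.


Lemma PX_cat (R : realFieldType) (A : finType) (p : A -> R) (s1 s2 : seq A) :
  PX p (s1 ++ s2) = PX p s1 * PX p s2.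
Proof. by rewrite /PX big_cat. Qed.

Lemma PX_td (R : realFieldType) (A : finType) (p : A -> R) k (s : seq A) :
  PX p s = PX p (take k s) * PX p (drop k s).
Proof. by rewrite -PX_cat cat_take_drop. Qed.
Arguments PX_td {R A} p k s.

Lemma PX_ge0 (R : realFieldType) (A : finType) (p : A -> R) (hp0 : forall y, 0 <= p y) s :
  0 <= PX p s.
Proof. by rewrite /PX; apply: prodr_ge0 => y _. Qed.

Lemma PX_le1 (R : realFieldType) (A : finType) (p : A -> R) (hp0 : forall y, 0 <= p y)
  (hp1 : \sum_y p y = 1) s : PX p s <= 1.
Proof.
rewrite /PX; apply: prodr_ile1 => y _; rewrite hp0 /=.
by rewrite -hp1 (bigD1 y) //= lerDl sumr_ge0.
Qed.

Lemma key (R : realFieldType) (A : finType) (p : A -> R) l (x y : l.-tuple A) s :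
  (drop (l - s) x == take s y)%:R * (PX p x * PX p (drop s y)) =
  PX p x * PX p y * ((drop (l - s) x == take s y)%:R * (PX p (take s y))^-1).
Proof.
case: eqP => hm; last by rewrite !mul0r mulr0.
rewrite !mul1r (PX_td p s y).
case: (eqVneq (PX p (take s y)) 0) => hz.
  rewrite (PX_td p (l - s) x) hm hz; by rewrite !(mulr0, mul0r).
by field.
Qed.

Lemma maxP m (P : pred 'I_m) :
  (\max_(i | P i) (i : nat) = 0)%N \/ exists2 i : 'I_m, P i & (\max_(i | P i) (i : nat))%N = i.
Proof.
case: (pickP P) => [i Pi|none]; last by left; rewrite big_pred0.
right; have hc : (0 < #|P|)%N by apply/card_gt0P; exists i.
have [j Pj hj] : {j | j \in P & (\max_(i | P i) (i : nat))%N = j} :=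
  eq_bigmax_cond (fun k : 'I_m => (k : nat)) hc.
by exists j.
Qed.

Lemma Gprops (R : realFieldType) (A : finType) (p : A -> R) (hp0 : forall y, 0 <= p y)
  (hp1 : \sum_y p y = 1) l (y : l.-tuple A) : 0 < PX p y ->
  (forall s, 1 <= Gamma p l y s) /\
  (forall s s', (0 < s)%N -> (s <= s')%N -> Gamma p l y s <= Gamma p l y s').
Proof.
move=> hy.
have hpos : forall s, 0 < PX p (take s y).
  move=> s; rewrite lt_def PX_ge0 // andbT.
  apply/eqP => h0; move: hy; rewrite (PX_td p s y) h0 mul0r; by rewrite ltxx.
split.
  move=> s; rewrite /Gamma; case: eqP => _ //.
  by rewrite invf_ge1 ?hpos // PX_le1.
move=> s s' hs hss'; rewrite /Gamma.
have -> : (s == 0)%N = false by lia.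
have -> : (s' == 0)%N = false by lia.
rewrite (PX_td p s (take s' y)) take_takel //.
set x := PX p (take s y); set r := PX p (drop s (take s' y)).
have hx : 0 < x by apply: hpos.
have hr : 0 < r.
  have := hpos s'; rewrite (PX_td p s (take s' y)) take_takel // -/x -/r.
  by rewrite pmulr_rgt0.
rewrite invfM -[X in X <= _]mulr1; apply: ler_wpM2l; first by rewrite invr_ge0 ltW.
by rewrite invf_ge1 // PX_le1.
Qed.


Theorem mainTheorem6 (R : realFieldType) (A : finType) (p : A -> R) (n l : nat)
  (hp0 : forall y : A, 0 <= p y) (hp1 : \sum_(y : A) p y = 1)
  (hl : (1 <= l)%N) (hn : (2 * l <= n)%N) :
  is_MAP_detector p n l (T_MAP p n l).
Proof.
move=> a b.
have x0 : A := tnth a (Ordinal hl).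
set tp := tplus l a b; set tm := tminus l a b.
set gp := Gamma p l b tp; set gm := Gamma p l a tm.
set nl : R := (n - (2 * l - 1))%N%:R.
have hnl : 1 <= nl by rewrite /nl ler1n; clear -hn hl; lia.
have hT : T_MAP p n l a b = if Num.max gm nl <= gp then tp%:Z
          else if Num.max gp nl <= gm then - (tm%:Z) else 0 by [].
have htp : (tp <= l)%N by apply/bigmax_leqP => i _; rewrite -ltnS.
have htm : (tm <= l - 1)%N by apply/bigmax_leqP => i _; move: (ltn_ord i); lia.
have tp_spec : tp = 0%N \/ (0 < tp)%N /\ drop (l - tp) a == take tp b.
  case: (maxP _ (fun t : 'I_l.+1 => (0 < t)%N && (drop (l - t) a == take t b))) => [h|[i /andP[h1 h2] h]].
    by left.
  by right; rewrite /tp /tplus h.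
have tm_spec : tm = 0%N \/ (0 < tm)%N /\ drop (l - tm) b == take tm a.
  case: (maxP _ (fun t : 'I_l => (0 < t)%N && (drop (l - t) b == take t a))) => [h|[i /andP[h1 h2] h]].
    by left.
  by right; rewrite /tm /tminus h.
have tp_max : forall s, (0 < s <= l)%N -> drop (l - s) a == take s b -> (s <= tp)%N.
  move=> s hs hm; have hs' : (s < l.+1)%N by lia.
  exact: (@leq_bigmax_cond _ (fun t : 'I_l.+1 => (0 < t)%N && (drop (l - t) a == take t b))
     (fun t => nat_of_ord t) (Ordinal hs')) (introT andP (conj (proj1 (andP hs)) hm)).
have tm_max : forall s, (0 < s < l)%N -> drop (l - s) b == take s a -> (s <= tm)%N.
  move=> s hs hm; have hs' : (s < l)%N by lia.
  exact: (@leq_bigmax_cond _ (fun t : 'I_l => (0 < t)%N && (drop (l - t) b == take t a))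
     (fun t => nat_of_ord t) (Ordinal hs')) (introT andP (conj (proj1 (andP hs)) hm)).
pose w (t : int) : R := if t == 0 then nl else if 0 < t then
   (drop (l - absz t) a == take (absz t) b)%:R * Gamma p l b (absz t)
   else (drop (l - absz t) b == take (absz t) a)%:R * Gamma p l a (absz t).
pose c := PX p a * PX p b.
have hscore : forall t : int, - (l%:Z - 1) <= t <= l%:Z -> map_score p n l t a b = c * w t / n%:R.
  move=> t ht; rewrite (score_val _ _ _ hp1 _ _ _ _ x0) // /qv /w.
  case: (eqVneq t 0) => [->|ht0] /=.
    by rewrite subn0 [drop l a]drop_oversize ?size_tuple //= take0 drop0 eqxx mul1r /c /nl mulrA.
  case: ifP => hpos.
    have hpos' : 0 < t by rewrite lt_def ht0.
    rewrite hpos' key /Gamma.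
    have -> : (absz t == 0)%N = false by clear -ht0; lia.
    by rewrite mul1r /c mulrA.
  have hneg : (0 < t) = false by clear -hpos; lia.
  rewrite hneg key /Gamma.
  have -> : (absz t == 0)%N = false by clear -ht0; lia.
  by rewrite mul1r /c (mulrC (PX p b)) mulrA.
have hTr : - (l%:Z - 1) <= T_MAP p n l a b <= l%:Z.
  rewrite hT; case: ifP => _; first by clear -htp hl; lia.
  case: ifP => _; clear -htm hl; lia.
split => // t ht.
rewrite (hscore t ht) (hscore _ hTr).
have hc0 : 0 <= c by rewrite /c mulr_ge0 ?PX_ge0.
case: (eqVneq c 0) => [->|hcn]; first by rewrite !mul0r.
have hcp : 0 < c by rewrite lt_def hcn hc0.
have hPa : 0 < PX p a.
  rewrite lt_def PX_ge0 // andbT; apply/eqP => h; move: hcn; by rewrite /c h mul0r eqxx.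
have hPb : 0 < PX p b.
  rewrite lt_def PX_ge0 // andbT; apply/eqP => h; move: hcn; by rewrite /c h mulr0 eqxx.
have [Ga1 Gam] := Gprops _ _ _ hp0 hp1 _ a hPa.
have [Gb1 Gbm] := Gprops _ _ _ hp0 hp1 _ b hPb.
have hw : w t <= w (T_MAP p n l a b).
  apply: (@le_trans _ _ (Num.max gp (Num.max gm nl))).
    rewrite /w; case: eqP => [_|ht0]; first by rewrite !le_max lexx !orbT.
    case: ifP => hpos.
      case: eqP => hm; last by rewrite mul0r !le_max (le_trans _ hnl) ?ler01 ?orbT.
      have hs : (absz t <= tp)%N by apply: tp_max; [clear -hpos ht; lia | apply/eqP].
      by rewrite mul1r le_max Gbm //; clear -hpos; lia.
    case: eqP => hm; last by rewrite mul0r !le_max (le_trans _ hnl) ?ler01 ?orbT.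
    have hs : (absz t <= tm)%N by apply: tm_max; [clear -hpos ht ht0; lia | apply/eqP].
    by rewrite mul1r !le_max Gam ?orbT //; clear -hpos ht0; lia.
  have hgp1 : 1 <= gp := Gb1 tp.
  have hgm1 : 1 <= gm := Ga1 tm.
  rewrite hT; case: ifP => hc1.
    move: hc1; rewrite ge_max => /andP[h1 h2].
    case: tp_spec => [h0|[h0 hm]].
      have hg : gp = 1 by rewrite /gp /Gamma h0.
      rewrite h0 /w eqxx !ge_max hg hnl (le_trans h1) ?hg //.
      by rewrite lexx.
    rewrite /w.
    have -> : (tp%:Z == 0) = false by clear -h0; lia.
    have -> : (0 < tp%:Z) = true by clear -h0; lia.
    by rewrite /= hm mul1r !ge_max lexx h1 h2.
  case: ifP => hc2.
    move: hc2; rewrite ge_max => /andP[h1 h2].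
    case: tm_spec => [h0|[h0 hm]].
      have hg : gm = 1 by rewrite /gm /Gamma h0.
      rewrite h0 /w oppr0 eqxx !ge_max hg hnl (le_trans h1) ?hg //.
      by rewrite lexx.
    rewrite /w.
    have -> : (- tm%:Z == 0) = false by clear -h0; lia.
    have -> : (0 < - tm%:Z) = false by clear -h0; lia.
    by rewrite abszN /= hm mul1r !ge_max lexx h1 h2.
  move: hc1 hc2; rewrite !ge_max /w eqxx lexx andbT.
  clear; case: (leP gm gp) => h1; case: (leP nl gp) => h2; case: (leP gp gm) => h3; case: (leP nl gm) => h4 //=; try lra.
have hn0 : 0 < n%:R^-1 :> R by rewrite invr_gt0 ltr0n; clear -hn hl; lia.
by rewrite ler_pM2r //; apply: ler_wpM2l.
Qed.
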